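(* Let $n,m$ be positive integers, $Q$ an integer valued positive definite quadratic form on $\mathbb{Z}^n$, and $1=m_1<\cdots<m_l=m$ the positive divisors of $m$. Let $S_i=\{(k_1,\dots,k_n)\in\mathbb{Z}^n:\gcd(k_1,m)=m_i\}$ and $T_i=\{(k_1,\dots,k_n)\in\mathbb{Z}^n:m_i\mid k_1\}$, and for a subset $T\subset\mathbb{Z}^n$ set $\Theta_{Q,T}(q)=\sum_{(k_1,\dots,k_n)\in T}q^{Q(k_1,\dots,k_n)}$. Then for each $i$, both $\Theta_{Q,T_i}(q)$ and $\Theta_{Q,S_i}(q)$ are $\mathbb{Z}$-linear combinations of theta series $\Theta_{Q'}(q)=\sum_{k\in\mathbb{Z}^n}q^{Q'(k)}$ of integer valued positive definite quadratic forms $Q'$ on $\mathbb{Z}^n$.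
   Context: An integer valued positive definite quadratic form on $\mathbb{Z}^n$ is a quadratic form taking integer values on $\mathbb{Z}^n$ and positive definite over $\mathbb{R}$. *)

(* Defs.v *)
From HB Require Import structures.
From mathcomp Require Import all_boot all_order all_algebra.
From mathcomp Require Import finmap.
From mathcomp Require Import boolp classical_sets cardinality.
From mathcomp Require Import Rstruct.
From Stdlib Require Import Reals.
Set Implicit Arguments. Unset Strict Implicit. Unset Printing Implicit Defensive.
Import Order.TTheory GRing.Theory Num.Theory.
Local Open Scope ring_scope.

(* An integer valued quadratic form on Z^n is represented by an integer
   coefficient matrix A: Q_A(k) = sum_{i,j} A_ij k_i k_j.  Every integer valued
   quadratic form arises this way (take A upper triangular). *)
Definition qf (n : nat) (A : 'M[int]_n) (k : 'rV[int]_n) : int :=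
  \sum_(i < n) \sum_(j < n) A i j * k 0 i * k 0 j.

Definition qfR (n : nat) (A : 'M[int]_n) (x : 'rV[R]_n) : R :=
  \sum_(i < n) \sum_(j < n) (A i j)%:~R * x 0 i * x 0 j.

Definition posdef (n : nat) (A : 'M[int]_n) : Prop :=
  forall x : 'rV[R]_n, x != 0 -> 0 < qfR A x.

(* Coefficient of q^N in Theta_{Q,T}(q) = sum_{k in T} q^{Q(k)}, i.e. the number
   of k in T with Q(k) = N (the set is finite when Q is positive definite). *)
Definition theta_coef (n : nat) (A : 'M[int]_n) (T : set 'rV[int]_n) (N : nat)
  : nat :=
  #|` fset_set [set k | T k /\ qf A k = N%:Z] |%fset.

(* Theta_{Q,T} is a Z-linear combination of theta series Theta_{Q'} of integer
   valued positive definite quadratic forms Q' on Z^n (equality of formal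
   power series in q, coefficientwise). *)
Definition Zcomb_of_thetas (n : nat) (A : 'M[int]_n) (T : set 'rV[int]_n)
  : Prop :=
  exists s : seq (int * 'M[int]_n),
    (forall p, p \in s -> posdef p.2) /\
    forall N : nat,
      (theta_coef A T N)%:Z
      = \sum_(p <- s) p.1 * (theta_coef p.2 setT N)%:Z.

(* Main.v *)
Require Import Defs.
From Stdlib Require Import Reals.
From HB Require Import structures.
From mathcomp Require Import all_boot all_order all_algebra.
From mathcomp Require Import finmap.
From mathcomp Require Import boolp classical_sets functions cardinality.
From mathcomp Require Import Rstruct Rstruct_topology.
From mathcomp Require Import topology normedtype derive.
From mathcomp Require Import ring lra zify.
Set Implicit Arguments. Unset Strict Implicit. Unset Printing Implicit Defensive.
Import Order.TTheory GRing.Theory Num.Theory.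
Local Open Scope ring_scope.
Local Open Scope classical_set_scope.

Lemma sum_continuous (T : topologicalType) (I : finType) (f : I -> T -> R) :
  (forall i, continuous (f i)) -> continuous (fun x => \sum_i f i x).
Proof.
move=> fc.
suff H : forall s : seq I, continuous (fun x => \sum_(i <- s) f i x).
  move=> x; have := H (index_enum I) x.
  by [].
elim=> [|a s IH] x.
  rewrite (_ : (fun x => _) = (fun=> 0)); first exact: cst_continuous.
  by apply/funext => y; rewrite big_nil.
rewrite (_ : (fun x => _) = (f a) + (fun x => \sum_(i <- s) f i x)).
  exact: (@continuousD R R^o T _ _ x (fc a x) (IH x)).
by apply/funext => y; rewrite big_cons.
Qed.

Lemma qfR_continuous n (A : 'M[int]_n) : continuous (qfR A).
Proof.
apply: sum_continuous => i; apply: sum_continuous => j z.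
have c1 : {for z, continuous (fun=> ((A i j)%:~R : R))} by exact: cst_continuous.
have c2 := (@coord_continuous R 1 n 0 i z).
have c3 := (@coord_continuous R 1 n 0 j z).
exact: (continuousM (continuousM c1 c2) c3).
Qed.

Lemma aux_ring (K : comRingType) (a t u v : K) :
  a * (t * u) * (t * v) = t ^+ 2 * (a * u * v).
Proof. ring. Qed.

Lemma qfRZ n (A : 'M[int]_n) t x : qfR A (t *: x) = t ^+ 2 * qfR A x.
Proof.
rewrite /qfR mulr_sumr; apply: eq_bigr => i _; rewrite mulr_sumr.
apply: eq_bigr => j _; rewrite !mxE; exact: aux_ring.
Qed.

Lemma qfR_int n (A : 'M[int]_n) k :
  qfR A (map_mx (fun z : int => z%:~R) k) = (qf A k)%:~R.
Proof.
rewrite /qf /qfR rmorph_sum; apply: eq_bigr => i _; rewrite rmorph_sum.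
by apply: eq_bigr => j _; rewrite !mxE !rmorphM.
Qed.

Lemma qf_bound n (A : 'M[int]_n.+1) : posdef A ->
  exists2 mu : R, 0 < mu & forall x, `|x| = 1 -> mu <= qfR A x.
Proof.
move=> pA.
set Sph := [set x : 'rV[R]_n.+1 | `|x| = 1].
have Sph0 : Sph !=set0.
  pose x : 'rV[R]_n.+1 := const_mx 1.
  have x0 : x != 0.
    by apply/eqP => /matrixP/(_ 0 0); rewrite !mxE => /eqP; rewrite oner_eq0.
  exists (`|x|^-1 *: x); rewrite /Sph /= normrZ ger0_norm ?invr_ge0 //.
  by rewrite mulVf // normr_eq0.
have cS : compact Sph.
  apply: bounded_closed_compact.
    exists 1; split => // M M1 x Sx; rewrite /= Sx ltW //.
  rewrite (_ : Sph = (@Num.norm _ _) @^-1` [set 1]) //.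
  apply: preimage_closed; last exact: closed_eq.
  by move=> y _; exact: norm_continuous.
have [c cS' minc] := EVT_min_rV Sph0 cS (continuous_subspaceT (@qfR_continuous _ A)).
exists (qfR A c).
  apply: pA; move: cS'; rewrite inE /Sph /= => c1.
  by apply/eqP => c0; move: c1; rewrite c0 normr0 => /eqP; rewrite eq_sym oner_eq0.
by move=> x x1; apply: minc; rewrite inE.
Qed.

Lemma int_bound_finite n (B : nat) :
  finite_set [set k : 'rV[int]_n | forall i, `|k 0 i| <= B%:Z].
Proof.
pose f (u : 'rV['I_(2 * B).+1]_n) : 'rV[int]_n :=
  \row_i ((u 0 i : nat)%:Z - B%:Z).
apply: (@sub_finite_set _ _ (f @` setT)); last exact: finite_image.
move=> k /= Hk; exists (\row_i (inord (absz (k 0 i + B%:Z)))) => //.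
apply/rowP => i; rewrite !mxE.
have := Hk i; rewrite ler_norml => /andP[h1 h2].
have h3 : 0 <= k 0 i + B%:Z by lia.
rewrite inordK; last by rewrite -ltz_nat gez0_abs //; lia.
by rewrite gez0_abs // addrK.
Qed.

Lemma qf_finite n (A : 'M[int]_n.+1) (N : int) : posdef A ->
  finite_set [set k | qf A k = N].
Proof.
move=> pA; have [mu mu0 Hmu] := qf_bound pA.
set M := `|(N%:~R : R)| / mu.
have M0 : 0 <= M by rewrite divr_ge0 // ltW.
set B := Num.Def.archi_bound M.
apply: (@sub_finite_set _ _ [set k : 'rV[int]_n.+1 | forall i, `|k 0 i| <= B%:Z]);
  last exact: int_bound_finite.
move=> k /= qk i.
set kr := map_mx (fun z : int => z%:~R : R) k.
have e1 : (`|k 0 i|%:~R : R) = `|kr 0 i| by rewrite mxE intr_norm.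
have key : (`|k 0 i|%:~R : R) <= M.
  have [ki0|ki0] := eqVneq (k 0 i) 0; first by rewrite ki0 normr0.
  have a1 : 1 <= (`|k 0 i|%:~R : R).
    by rewrite ler1z -normr_gt0 in ki0 *.
  have kr0 : kr != 0.
    apply/eqP => /matrixP/(_ 0 i); rewrite !mxE => /eqP.
    by rewrite intr_eq0 (negbTE ki0).
  set t := `|kr|.
  have t0 : 0 < t by rewrite normr_gt0.
  have xn : `|t^-1 *: kr| = 1.
    by rewrite normrZ ger0_norm ?invr_ge0 ?ltW // mulVf // gt_eqF.
  have hq : qfR A kr = t ^+ 2 * qfR A (t^-1 *: kr).
    by rewrite -qfRZ scalerA mulfV ?gt_eqF // scale1r.
  have le1 : `|kr 0 i| <= t.
    rewrite /t [leRHS]/Num.norm /= mx_normrE; apply/bigmax_geP; right => /=.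
    by exists (0, i).
  have le2 : t ^+ 2 * mu <= `|(N%:~R : R)|.
    apply: (le_trans _ (ler_norm _)).
    rewrite -qk -qfR_int -/kr hq; apply: ler_wpM2l; first exact: sqr_ge0.
    exact: Hmu.
  rewrite /M ler_pdivlMr //; apply: le_trans le2.
  apply: ler_wpM2r; first exact: ltW.
  apply: (le_trans (y := (`|k 0 i|%:~R : R) ^+ 2)).
    by rewrite expr2 ler_peMl // (le_trans ler01 a1).
  rewrite lerXn2r ?nnegrE // ?e1 //.
  exact: ltW.
have : (`|k 0 i|%:~R : R) < B%:R by apply: le_lt_trans key (archi_boundP M0).
by rewrite -[B%:R]/((B%:Z)%:~R) ltr_int => /ltW.
Qed.

Definition sfac (d : nat) n (i : 'I_n.+1) : int := if i == ord0 then d%:Z else 1.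
Definition scv (d : nat) n (k : 'rV[int]_n.+1) : 'rV[int]_n.+1 :=
  \row_i (sfac d i * k 0 i).
Definition scM (d : nat) n (A : 'M[int]_n.+1) : 'M[int]_n.+1 :=
  \matrix_(i, j) (sfac d i * sfac d j * A i j).

Lemma aux_ring2 (K : comRingType) (a u v x y : K) :
  u * v * a * x * y = a * (u * x) * (v * y).
Proof. ring. Qed.

Lemma qf_scM d n (A : 'M[int]_n.+1) k : qf (scM d A) k = qf A (scv d k).
Proof.
apply: eq_bigr => i _; apply: eq_bigr => j _; rewrite !mxE; exact: aux_ring2.
Qed.

Lemma sfac_neq0 d n (i : 'I_n.+1) : (0 < d)%N -> sfac d i != 0.
Proof. by rewrite /sfac; case: ifP => // _ d0; rewrite -lt0n. Qed.

Lemma posdef_scM d n (A : 'M[int]_n.+1) : (0 < d)%N -> posdef A -> posdef (scM d A).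
Proof.
move=> d0 pA x x0.
have -> : qfR (scM d A) x = qfR A (\row_i ((sfac d i)%:~R * x 0 i)).
  apply: eq_bigr => i _; apply: eq_bigr => j _; rewrite !mxE !rmorphM.
  exact: aux_ring2.
apply: pA; apply: contra x0 => /eqP/rowP H; apply/eqP/rowP => i.
have := H i; rewrite !mxE => /eqP; rewrite mulf_eq0 intr_eq0 (negbTE (sfac_neq0 i d0)).
by move/eqP.
Qed.

Lemma scv_inj d n : (0 < d)%N -> injective (@scv d n).
Proof.
move=> d0 k1 k2 /rowP H; apply/rowP => i; have := H i; rewrite !mxE.
by move/mulfI; apply; exact: sfac_neq0.
Qed.

Lemma coef_count n (A : 'M[int]_n.+1) (P : pred 'rV[int]_n.+1) (N : nat) :
  posdef A ->
  theta_coef A [set k | P k] N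
  = count P (fset_set [set k | qf A k = N%:Z]).
Proof.
move=> pA; have fL := qf_finite N%:Z pA.
set L := [set k | qf A k = N%:Z]; set F := fset_set L.
have fX : finite_set [set k | P k /\ qf A k = N%:Z].
  by apply: sub_finite_set fL => k [].
rewrite /theta_coef.
have -> : fset_set [set k | P k /\ qf A k = N%:Z] = [fset x in seq.filter P F]%fset.
  apply/fsetP => x; rewrite in_fset_set // !inE mem_filter in_fset_set //.
  apply/idP/idP => [/set_mem [px h] | /andP [px /set_mem h]].
    by rewrite px; apply/mem_set.
  by apply/mem_set.
by rewrite card_fseq undup_id ?size_filter // filter_uniq // fset_uniq.
Qed.

Lemma T_comb n (A : 'M[int]_n.+1) (d : nat) : (0 < d)%N -> posdef A ->
  Zcomb_of_thetas A [set k : 'rV[int]_n.+1 | (d%:Z %| k ord0 ord0)%Z].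
Proof.
move=> d0 pA; exists [:: (1, scM d A)]; split.
  by move=> p; rewrite inE => /eqP ->; exact: posdef_scM.
move=> N; rewrite big_seq1 mul1r; congr (_%:Z).
have pA' := posdef_scM d0 pA.
have fX : finite_set [set k | setT k /\ qf (scM d A) k = N%:Z].
  by apply: sub_finite_set (qf_finite N%:Z pA') => k [].
rewrite /theta_coef.
have -> : [set k : 'rV[int]_n.+1 | (d%:Z %| k ord0 ord0)%Z /\ qf A k = N%:Z]
    = @scv d n @` [set k | setT k /\ qf (scM d A) k = N%:Z].
  apply/seteqP; split => k.
    move=> [dk qk].
    exists (\row_i (if i == ord0 then (k ord0 i %/ d%:Z)%Z else k ord0 i)).
      split => //; rewrite qf_scM -qk; congr (qf A _).
      apply/rowP => i; rewrite !mxE /sfac; case: ifP => [/eqP ->|_]; last by rewrite mul1r.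
      by rewrite mulrC divzK.
    apply/rowP => i; rewrite !mxE /sfac; case: ifP => [/eqP ->|_]; last by rewrite mul1r.
    by rewrite mulrC divzK.
  move=> [k' [_ qk'] <-]; split; last by rewrite -qf_scM.
  by rewrite !mxE /sfac eqxx dvdz_mulr.
rewrite fset_set_image // card_imfset //; last exact: scv_inj.
Qed.

Definition rep n (c : nat -> int) := exists s : seq (int * 'M[int]_n.+1),
  (forall p, p \in s -> posdef p.2) /\
  forall N, c N = \sum_(p <- s) p.1 * (theta_coef p.2 setT N)%:Z.

Lemma rep0 n : rep n (fun=> 0).
Proof. by exists [::]; split => // N; rewrite big_nil. Qed.

Lemma rep_add n c1 c2 : rep n c1 -> rep n c2 -> rep n (fun N => c1 N + c2 N).
Proof.
move=> [s1 [p1 h1]] [s2 [p2 h2]]; exists (s1 ++ s2); split.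
  by move=> p; rewrite mem_cat => /orP[]; [exact: p1 | exact: p2].
by move=> N; rewrite big_cat h1 h2.
Qed.

Lemma rep_opp n c : rep n c -> rep n (fun N => - c N).
Proof.
move=> [s [p h]]; exists (map (fun p => (- p.1, p.2)) s); split.
  by move=> q /mapP [x xs ->]; exact: (p _ xs).
by move=> N; rewrite big_map h -sumrN; apply: eq_bigr => q _; rewrite mulNr.
Qed.

Lemma rep_sum n (I : eqType) (r : seq I) (P : pred I) (c : I -> nat -> int) :
  (forall i, i \in r -> P i -> rep n (c i)) ->
  rep n (fun N => \sum_(i <- r | P i) c i N).
Proof.
elim: r => [|a r IH] H.
  have -> : (fun N => \sum_(i <- [::] | P i) c i N) = fun=> 0.
    by apply/funext => N; rewrite big_nil.
  exact: rep0.
case Pa: (P a).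
  have -> : (fun N => \sum_(i <- a :: r | P i) c i N)
      = fun N => c a N + \sum_(i <- r | P i) c i N.
    by apply/funext => N; rewrite big_cons Pa.
  apply: rep_add; first by apply: H Pa; rewrite mem_head.
  by apply: IH => i ir; apply: H; rewrite in_cons ir orbT.
have -> : (fun N => \sum_(i <- a :: r | P i) c i N)
    = fun N => \sum_(i <- r | P i) c i N.
  by apply/funext => N; rewrite big_cons Pa.
by apply: IH => i ir; apply: H; rewrite in_cons ir orbT.
Qed.

Lemma count_sum (T I : Type) (PT : pred T) (r : seq I) (Q : pred I)
  (PS : I -> pred T) (s : seq T) :
  (forall k, (PT k : nat) = \sum_(i <- r | Q i) (PS i k : nat)) ->
  count PT s = \sum_(i <- r | Q i) count (PS i) s.
Proof.
move=> H; elim: s => [|x s IH] /=; first by rewrite big1.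
by rewrite IH H -big_split.
Qed.

Lemma sum_eq_uniq (r : seq nat) (Q : pred nat) g : uniq r ->
  \sum_(i <- r | Q i) (g == i : nat) = ((g \in r) && Q g).
Proof.
elim: r => [|a r IH] /=; first by rewrite big_nil.
move=> /andP[anr ur]; rewrite big_cons IH // in_cons.
case: (eqVneq g a) => [->|gna] /=.
  by rewrite (negbTE anr) /=; case: (Q a).
by case: (Q a).
Qed.

Lemma natz_sum (I : Type) (r : seq I) (P : pred I) (F : I -> nat) :
  (\sum_(i <- r | P i) F i)%:Z = \sum_(i <- r | P i) (F i)%:Z.
Proof.
elim: r => [|a r IH]; first by rewrite !big_nil.
by rewrite !big_cons; case: (P a); rewrite ?PoszD IH.
Qed.

Lemma divisors_gt0 m d : (0 < m)%N -> d \in divisors m -> (0 < d)%N.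
Proof.
move=> m0; rewrite -dvdn_divisors //; case: d => //; rewrite dvd0n => /eqP m00.
by move: m0; rewrite m00.
Qed.

Lemma decomp n (A : 'M[int]_n.+1) m d N : (0 < m)%N -> posdef A ->
  d \in divisors m ->
  (theta_coef A [set k | (d%:Z %| k ord0 ord0)%Z] N)%:Z
  = \sum_(d' <- divisors m | (d %| d')%N)
      (theta_coef A [set k | gcdz (k ord0 ord0) m%:Z == d'%:Z] N)%:Z.
Proof.
move=> m0 pA hd.
have dm : (d %| m)%N by rewrite dvdn_divisors.
rewrite -natz_sum; congr (_%:Z).
rewrite coef_count //.
under eq_bigr => d' _ do rewrite coef_count //.
apply: count_sum => k.
under eq_bigr => d' _ do rewrite /gcdz eqz_nat.
rewrite sum_eq_uniq ?divisors_uniq // -dvdn_divisors // dvdn_gcdr /=.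
by rewrite dvdn_gcd dm andbT dvdzE absz_nat.
Qed.

Lemma S_comb n (A : 'M[int]_n.+1) m : (0 < m)%N -> posdef A ->
  forall d, d \in divisors m ->
  rep n (fun N => (theta_coef A [set k | gcdz (k ord0 ord0) m%:Z == d%:Z] N)%:Z).
Proof.
move=> m0 pA.
suff H : forall K d, (m - d < K)%N -> d \in divisors m ->
  rep n (fun N => (theta_coef A [set k | gcdz (k ord0 ord0) m%:Z == d%:Z] N)%:Z).
  by move=> d; apply: (H (m - d).+1).
elim=> [//|K IH] d hK hd.
have d0 := divisors_gt0 m0 hd.
have dm : (d %| m)%N by rewrite dvdn_divisors.
have -> : (fun N => (theta_coef A [set k | gcdz (k ord0 ord0) m%:Z == d%:Z] N)%:Z)
  = fun N => (theta_coef A [set k | (d%:Z %| k ord0 ord0)%Z] N)%:Z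
     - \sum_(d' <- divisors m | (d %| d')%N && (d' != d))
        (theta_coef A [set k | gcdz (k ord0 ord0) m%:Z == d'%:Z] N)%:Z.
  apply/funext => N; rewrite (decomp N m0 pA hd) -big_filter.
  rewrite (bigD1_seq d) ?filter_uniq ?divisors_uniq ?mem_filter ?dvdnn ?hd //=.
  by rewrite big_filter_cond addrK.
apply: rep_add; first exact: T_comb.
apply: rep_opp; apply: rep_sum => d' hd' /andP[dd' d'nd].
have d'm : (d' %| m)%N by rewrite dvdn_divisors.
have d'0 := divisors_gt0 m0 hd'.
apply: IH hd'.
have le1 := dvdn_leq d'0 dd'.
have le2 := dvdn_leq m0 d'm.
have ne : d' <> d by move/eqP: d'nd.
lia.
Qed.

Theorem lemma3p4 (n' m : nat) (A : 'M[int]_n'.+1) :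
  (0 < m)%N -> posdef A ->
  forall d : nat, d \in divisors m ->
    Zcomb_of_thetas A [set k : 'rV[int]_n'.+1 | (d%:Z %| k ord0 ord0)%Z]
    /\ Zcomb_of_thetas A
         [set k : 'rV[int]_n'.+1 | gcdz (k ord0 ord0) m%:Z = d%:Z].
Proof.
move=> m0 pA d hd; split.
  exact: T_comb (divisors_gt0 m0 hd) pA.
have -> : [set k : 'rV[int]_n'.+1 | gcdz (k ord0 ord0) m%:Z = d%:Z]
    = [set k | gcdz (k ord0 ord0) m%:Z == d%:Z].
  by apply/seteqP; split => k /= /eqP.
exact: (S_comb m0 pA hd).
Qed.
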